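(* In the setting of the context (with $p>L$), for all $x\in X$, $y\in Y$, $z\in\mathbb{R}^n$ we have $\phi(x,y,z)\ge\underline{f}$.
   Context: $X\subseteq\mathbb{R}^n$ nonempty closed convex, $Y\subseteq\mathbb{R}^m$ nonempty closed convex compact, $f$ continuously differentiable with $f(x,\cdot)$ concave, $\nabla_xf,\nabla_yf$ $L$-Lipschitz, and $\psi(x)=\max_{y\in Y}f(x,y)\ge\underline{f}$ for all $x\in X$, with $\underline{f}$ finite. $K(x,z;y)=f(x,y)+\frac p2\|x-z\|^2$; $d(y,z)=\min_{x\in X}K(x,z;y)$; $P(z)=\min_{x\in X}\max_{y\in Y}K(x,z;y)$; $\phi(x,y,z)=K(x,z;y)-2d(y,z)+2P(z)$. *)

(* Defs.v *)
From HB Require Import structures.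
From mathcomp Require Import all_boot all_order all_algebra.
From mathcomp Require Import all_classical all_reals all_analysis.
Set Implicit Arguments. Unset Strict Implicit. Unset Printing Implicit Defensive.
Import Order.TTheory GRing.Theory Num.Theory.
Import numFieldNormedType.Exports.
Local Open Scope classical_set_scope.
Local Open Scope ring_scope.

Section Defs.
Variable R : realType.

Definition sqnorm {k : nat} (v : 'rV[R]_k) : R := \sum_(i < k) (v 0 i) ^+ 2.
Definition enorm {k : nat} (v : 'rV[R]_k) : R := Num.sqrt (sqnorm v).

Definition convexR {k : nat} (A : set 'rV[R]_k) : Prop :=
  forall a b t, A a -> A b -> 0 <= t -> t <= 1 -> A (t *: a + (1 - t) *: b).

Definition gradx {n m : nat} (f : 'rV[R]_n -> 'rV[R]_m -> R) x y : 'rV[R]_n :=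
  \row_(i < n) 'D_(delta_mx 0 i) (fun x' => f x' y) x.
Definition grady {n m : nat} (f : 'rV[R]_n -> 'rV[R]_m -> R) x y : 'rV[R]_m :=
  \row_(j < m) 'D_(delta_mx 0 j) (fun y' => f x y') y.

Definition Kf {n m : nat} (f : 'rV[R]_n -> 'rV[R]_m -> R) (p : R) x z y : R :=
  f x y + p / 2 * sqnorm (x - z).

Definition dfun {n m : nat} (f : 'rV[R]_n -> 'rV[R]_m -> R) (p : R)
  (X : set 'rV[R]_n) y z : R := inf [set Kf f p x z y | x in X].

Definition Pfun {n m : nat} (f : 'rV[R]_n -> 'rV[R]_m -> R) (p : R)
  (X : set 'rV[R]_n) (Y : set 'rV[R]_m) z : R :=
  inf [set sup [set Kf f p x z y | y in Y] | x in X].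

Definition phifun {n m : nat} (f : 'rV[R]_n -> 'rV[R]_m -> R) (p : R)
  (X : set 'rV[R]_n) (Y : set 'rV[R]_m) x y z : R :=
  Kf f p x z y - 2 * dfun f p X y z + 2 * Pfun f p X Y z.

End Defs.

(* Main.v *)
Require Import Defs.
From HB Require Import structures.
From mathcomp Require Import all_boot all_order all_algebra.
From mathcomp Require Import all_classical all_reals all_analysis.
Import Order.TTheory GRing.Theory Num.Theory.
Import numFieldNormedType.Exports.
Local Open Scope classical_set_scope.
Local Open Scope ring_scope.
From mathcomp Require Import ring lra.

Lemma line_derive (R : realType) (k : nat) (g : 'rV[R]_k -> R) (z v : 'rV[R]_k) (t : R) :
  derivable g (z + t *: v) v ->
  is_derive t 1 (fun s : R => g (z + s *: v)) ('D_v g (z + t *: v)).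
Proof.
move=> dg.
have E : (fun h : R => h^-1 *: (((fun s : R => g (z + s *: v)) \o shift t) (h *: 1) - g (z + t *: v)))
   = (fun h : R => h^-1 *: ((g \o shift (z + t *: v)) (h *: v) - g (z + t *: v))).
  apply/funext => h /=; congr (_ *: (g _ - _)).
  by rewrite scaler1 scalerDl addrCA.
split; first by rewrite /derivable E.
by rewrite /derive E.
Qed.
Lemma derive_sum (R : realType) (k : nat) (g : 'rV[R]_k -> R) (w v : 'rV[R]_k) :
  differentiable g w ->
  'D_v g w = \sum_(i < k) v 0 i * 'D_(delta_mx 0 i) g w.
Proof.
move=> dg; rewrite deriveE //.
rewrite {1}(row_sum_delta v) linear_sum; apply: eq_bigr => i _.
by rewrite linearZ deriveE.
Qed.

Lemma cs_sq (R : realType) (k : nat) (a b : 'rV[R]_k) :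
  (\sum_(i < k) a 0 i * b 0 i) ^+ 2 <= sqnorm a * sqnorm b.
Proof.
set A := sqnorm a; set B := sqnorm b; set C := \sum_(i < k) a 0 i * b 0 i.
have H t : 0 <= A * t ^+ 2 + 2 * C * t + B.
  have -> : A * t ^+ 2 + 2 * C * t + B = \sum_(i < k) (a 0 i * t + b 0 i) ^+ 2.
    rewrite /A /B /C /sqnorm -[2 * _ * t]mulrA !mulr_suml mulr_sumr -!big_split /=.
    by apply: eq_bigr => i _; ring.
  by apply: sumr_ge0 => i _; exact: sqr_ge0.
have A0 : 0 <= A by apply: sumr_ge0 => i _; exact: sqr_ge0.
have [Az|Apos] := eqVneq A 0.
  have ai i : a 0 i = 0.
    have := @psumr_eq0P _ _ _ _ (fun i _ => sqr_ge0 (a 0 i)) Az i isT.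
    by move=> /eqP; rewrite sqrf_eq0 => /eqP.
  have -> : C = 0 by rewrite /C big1 // => i _; rewrite ai mul0r.
  by rewrite Az expr0n /= mul0r.
have Ap : 0 < A by rewrite lt_def Apos A0.
have := H (- C / A).
have tA : A * (- C / A) = - C by rewrite mulrC divfK.
set t := - C / A in tA *.
move=> Ht.
have : 0 <= A * (A * t ^+ 2 + 2 * C * t + B) by apply: mulr_ge0 => //; lra.
have -> : A * (A * t ^+ 2 + 2 * C * t + B) = (A * t) ^+ 2 + 2 * C * (A * t) + A * B by ring.
rewrite tA; lra.
Qed.

Lemma cs (R : realType) (k : nat) (a b : 'rV[R]_k) :
  `| \sum_(i < k) a 0 i * b 0 i | <= enorm a * enorm b.
Proof.
have A0 : 0 <= sqnorm a by apply: sumr_ge0 => i _; exact: sqr_ge0.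
rewrite /enorm -sqrtrM // -(sqrtr_sqr (\sum_(i < k) a 0 i * b 0 i)).
by rewrite ler_sqrt ?cs_sq // mulr_ge0 // sumr_ge0 // => i _; exact: sqr_ge0.
Qed.

Lemma sqnorm_ge0 (R : realType) k (u : 'rV[R]_k) : 0 <= sqnorm u.
Proof. by apply: sumr_ge0 => i _; exact: sqr_ge0. Qed.

Lemma sqZ (R : realType) k (a : R) (u : 'rV[R]_k) : sqnorm (a *: u) = a ^+ 2 * sqnorm u.
Proof. by rewrite /sqnorm mulr_sumr; apply: eq_bigr => i _; rewrite mxE exprMn. Qed.

Lemma sq0 (R : realType) k : sqnorm (0 : 'rV[R]_k) = 0.
Proof. by rewrite /sqnorm big1 // => i _; rewrite mxE expr0n. Qed.

Lemma descent (R : realType) (n m : nat) (f : 'rV[R]_n -> 'rV[R]_m -> R) (L : R)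
  (hdiff : forall q : 'rV[R]_n * 'rV[R]_m,
      differentiable (fun q' : 'rV[R]_n * 'rV[R]_m => f q'.1 q'.2) q)
  (hLx : forall x1 y1 x2 y2,
      enorm (gradx f x1 y1 - gradx f x2 y2)
        <= L * Num.sqrt (sqnorm (x1 - x2) + sqnorm (y1 - y2)))
  (y : 'rV[R]_m) (z v : 'rV[R]_n) :
  f z y + \sum_(i < n) v 0 i * gradx f z y 0 i - L / 2 * sqnorm v <= f (z + v) y.
Proof.
pose g := fun x' => f x' y.
have dg w : differentiable g w.
  have := @differentiable_comp _ _ _ _ (fun x : 'rV[R]_n => (x, y))
     (fun q' : 'rV[R]_n * 'rV[R]_m => f q'.1 q'.2) w.
  apply; last exact: hdiff.
  by apply: differentiable_pair.
pose G t := \sum_(i < n) v 0 i * gradx f (z + t *: v) y 0 i.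
pose h t := g (z + t *: v).
have hh (t : R) : is_derive t (1 : R) h (G t).
  apply: is_derive_eq; first exact/line_derive/diff_derivable.
  rewrite derive_sum //; apply: eq_bigr => i _; by rewrite /gradx mxE.

pose G0 := G 0; pose c := L * sqnorm v / 2.
pose kf : R -> R := h - (G0 \*: id) + c \*: (id ^+ 2).
have hk (t : R) : is_derive t (1:R) kf (G t - G0 *: 1 + c *: ((2%:R * t ^+ 1) *: 1)).
  exact: is_deriveD (is_deriveB (hh t) (is_deriveZ G0 (is_derive_id t 1))) (is_deriveZ c (is_deriveX 2 (is_derive_id t 1))).
have := @MVT R kf _ 0 1 ltr01 (fun t _ => hk t).
have kc : {within `[0, 1], continuous kf}.
  by apply: derivable_within_continuous => t _; exact: (@ex_derive _ _ _ _ _ _ _ (hk t)).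
move=> /(_ kc) [c0 c0in E].
have kfE t : kf t = h t - G0 * t + c * (t * t) by [].
move: E; rewrite !kfE /h /g /G0 /G scale1r scale0r addr0 !mulr1 !mulr0 !subr0 addr0.
set S1 := \sum_(i < n) _ * gradx f (z + c0 *: v) y 0 i.
set S0 := \sum_(i < n) _.
have key : - (L * c0 * sqnorm v) <= S1 - S0.
  have c0p : 0 < c0 by move: c0in; rewrite in_itv /= => /andP[].
  pose d := gradx f (z + c0 *: v) y - gradx f z y.
  have SE : S1 - S0 = \sum_(i < n) d 0 i * v 0 i.
    by rewrite /S1 /S0 -sumrB; apply: eq_bigr => i _; rewrite /d !mxE; ring.
  have hd := hLx (z + c0 *: v) y z y.
  rewrite addrAC subrr add0r subrr sqZ sq0 addr0 sqrtrM ?sqr_ge0 // sqrtr_sqr ger0_norm ?(ltW c0p) // in hd.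
  have vv : enorm v * enorm v = sqnorm v by rewrite /enorm -expr2 sqr_sqrtr // sqnorm_ge0.
  have ev : 0 <= enorm v by exact: sqrtr_ge0.
  have h1 : enorm d * enorm v <= L * (c0 * enorm v) * enorm v by exact: ler_wpM2r.
  have h2 := cs _ _ d v.
  have h3 := ler_norm (- \sum_(i < n) d 0 i * v 0 i); rewrite normrN in h3.
  have h4 : L * (c0 * enorm v) * enorm v = L * c0 * sqnorm v by rewrite -vv; ring.
  rewrite SE; rewrite h4 in h1; lra.
rewrite /GRing.scale /= !mulr1 => E.
rewrite expr1 in E.
have c2 : c * (2 * c0) = L * c0 * sqnorm v by rewrite /c; field.
have cE : L / 2 * sqnorm v = c by rewrite /c mulrAC.
rewrite cE; lra.
Qed.

Lemma quad_lb (R : realType) (q e s : R) : 0 < q -> - (e ^+ 2 / (2 * q)) <= q / 2 * s ^+ 2 - e * s.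
Proof.
move=> qp; pose w := e / q.
have ew : e = q * w by rewrite /w mulrC divfK // gt_eqF.
have E : e ^+ 2 / (2 * q) = q * w ^+ 2 / 2 by rewrite ew; field; rewrite gt_eqF.
rewrite E ew.
have := mulr_ge0 (ltW qp) (sqr_ge0 (s - w)).
have -> : q / 2 * s ^+ 2 - q * w * s = q * s ^+ 2 / 2 - q * w * s by field.
nra.
Qed.

Theorem lemma3 (R : realType) (n m : nat)
  (X : set 'rV[R]_n) (Y : set 'rV[R]_m)
  (f : 'rV[R]_n -> 'rV[R]_m -> R) (L p flow : R)
  (hXne : X !=set0) (hXcl : closed X) (hXcv : convexR X)
  (hYne : Y !=set0) (hYcl : closed Y) (hYcv : convexR Y) (hYcp : compact Y)
  (hdiff : forall q : 'rV[R]_n * 'rV[R]_m,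
      differentiable (fun q' : 'rV[R]_n * 'rV[R]_m => f q'.1 q'.2) q)
  (hcont : forall q : 'rV[R]_n * 'rV[R]_m,
      {for q, continuous (fun q' : 'rV[R]_n * 'rV[R]_m => gradx f q'.1 q'.2)} /\
      {for q, continuous (fun q' : 'rV[R]_n * 'rV[R]_m => grady f q'.1 q'.2)})
  (hconc : forall x y1 y2 t, 0 <= t -> t <= 1 ->
      t * f x y1 + (1 - t) * f x y2 <= f x (t *: y1 + (1 - t) *: y2))
  (hLx : forall x1 y1 x2 y2,
      enorm (gradx f x1 y1 - gradx f x2 y2)
        <= L * Num.sqrt (sqnorm (x1 - x2) + sqnorm (y1 - y2)))
  (hLy : forall x1 y1 x2 y2,
      enorm (grady f x1 y1 - grady f x2 y2)
        <= L * Num.sqrt (sqnorm (x1 - x2) + sqnorm (y1 - y2)))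
  (hpsi : forall x, X x -> flow <= sup [set f x y | y in Y])
  (hpL : L < p) :
  forall x y (z : 'rV[R]_n), X x -> Y y -> flow <= phifun f p X Y x y z.
Proof.
move=> x y z Xx Yy.
have cge0 : forall w : 'rV[R]_n, 0 <= p / 2 * sqnorm w.
  move=> w; have [w0|wp] := eqVneq (sqnorm w) 0; first by rewrite w0 mulr0.
  have wpos : 0 < sqnorm w by rewrite lt_def wp sqnorm_ge0.
  have := hLx w y 0 y; rewrite subr0 subrr sq0 addr0 => h.
  have h0 : 0 <= L * Num.sqrt (sqnorm w) by apply: le_trans h; exact: sqrtr_ge0.
  have L0 : 0 <= L.
    by move: h0; rewrite pmulr_lge0 // sqrtr_gt0.
  apply: mulr_ge0; [lra | exact: sqnorm_ge0].
have ubS : forall x', has_ubound [set f x' y' | y' in Y].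
  move=> x'.
  have fc : continuous (fun y' : 'rV[R]_m => f x' y').
    move=> y'; apply: differentiable_continuous.
    have := @differentiable_comp _ _ _ _ (fun y0 : 'rV[R]_m => (x', y0))
       (fun q' : 'rV[R]_n * 'rV[R]_m => f q'.1 q'.2) y'.
    apply; last exact: hdiff.
    by apply: differentiable_pair.
  have cp := continuous_compact (continuous_subspaceT fc) hYcp.
  have [M [_ HM]] := compact_bounded cp.
  exists (M + 1) => r Sr.
  have := HM (M + 1) (ltr_pwDr ltr01 (lexx M)) r Sr.
  by move=> /= h; apply: le_trans h; exact: ler_norm.
pose KS x' := [set Kf f p x' z y' | y' in Y].
have hsKS x' : has_sup (KS x').
  split; first by exists (Kf f p x' z y), y.
  have [M HM] := ubS x'; exists (M + p / 2 * sqnorm (x' - z)) => r [y' Yy' <-].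
  by rewrite /Kf lerD2r; apply: HM; exists y'.
have KSub x' y' : Y y' -> Kf f p x' z y' <= sup (KS x').
  by move=> Yy'; apply: sup_upper_bound (hsKS x') _ _; exists y'.
have Pflow : flow <= Defs.Pfun f p X Y z.
  rewrite /Defs.Pfun; apply: lb_le_inf; first by exists (sup (KS x)), x.
  move=> r [x' Xx' <-]; apply: le_trans (hpsi x' Xx') _.
  have : sup [set f x' y0 | y0 in Y] <= sup (KS x') - p / 2 * sqnorm (x' - z).
    apply: ge_sup; first by exists (f x' y), y.
    by move=> r0 [y' Yy' <-]; have := KSub x' y' Yy'; rewrite /Kf; lra.
  have := cge0 (x' - z); rewrite /KS; lra.
have lbD : has_lbound [set Kf f p x' z y | x' in X].
  pose gz := gradx f z y.
  exists (f z y - enorm gz ^+ 2 / (2 * (p - L))).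
  move=> r [x' Xx' <-].
  have := descent _ n m f L hdiff hLx y z (x' - z); have ez : z + (x' - z) = x' by rewrite addrC subrK.
  rewrite ez => hde.
  have cs1 := cs _ _ (x' - z) gz.
  have cs2 := ler_norm (- \sum_(i < n) (x' - z) 0 i * gz 0 i); rewrite normrN in cs2.
  have pL : 0 < p - L by rewrite subr_gt0.
  have q := quad_lb _ (p - L) (enorm gz) (enorm (x' - z)) pL.
  have ev : enorm (x' - z) ^+ 2 = sqnorm (x' - z) by rewrite /enorm sqr_sqrtr // sqnorm_ge0.
  rewrite ev [enorm gz * _]mulrC in q.
  rewrite /Kf; rewrite /gz in cs1 cs2 q |- *; lra.
have dK : Defs.dfun f p X y z <= Kf f p x z y.
  by apply: (ge_inf lbD); exists x.
have dP : Defs.dfun f p X y z <= Defs.Pfun f p X Y z.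
  rewrite /Defs.Pfun; apply: lb_le_inf; first by exists (sup (KS x)), x.
  move=> r [x' Xx' <-]; apply: le_trans (KSub x' y Yy).
  by apply: (ge_inf lbD); exists x'.
rewrite /phifun; lra.
Qed.
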